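(* Let $\Gamma\subseteq\mathit{Aff}(2,\mathbb{H})$ be a subgroup acting freely on $\mathbb{H}^2$. Then $\Gamma$ is conjugate in $\mathit{Aff}(2,\mathbb{H})$ to a subgroup of $G_1$ or of $G_2$.
   Context: $\mathit{Aff}(2,\mathbb{H})$ is identified with invertible $3\times3$ quaternionic matrices $\begin{pmatrix} a&b&r\\ c&d&s\\ 0&0&1\end{pmatrix}$ acting on $(x,y)\in\mathbb{H}^2$ by $(x,y)\mapsto(ax+by+r,cx+dy+s)$. $G_1=\left\{\begin{pmatrix} a&b&r\\ 0&1&s\\ 0&0&1\end{pmatrix}: a,b,r,s\in\mathbb{H}, a\neq0\right\}$ and $G_2=\left\{\begin{pmatrix} 1&b&r\\ 0&d&s\\ 0&0&1\end{pmatrix}: b,r,s,d\in\mathbb{H}, d\neq0\right\}$. *)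

(* Defs.v *)
From mathcomp Require Import all_boot all_order all_algebra.
From mathcomp Require Import reals.
Set Implicit Arguments. Unset Strict Implicit. Unset Printing Implicit Defensive.
Import GRing.Theory Num.Theory.
Local Open Scope ring_scope.

Section Quat.
Variable R : realType.

Record quat := Quat { qr : R; qi : R; qj : R; qk : R }.

Definition qzero : quat := Quat 0 0 0 0.
Definition qone : quat := Quat 1 0 0 0.
Definition qadd (p q : quat) : quat :=
  Quat (qr p + qr q) (qi p + qi q) (qj p + qj q) (qk p + qk q).
Definition qmul (p q : quat) : quat :=
  Quat (qr p * qr q - qi p * qi q - qj p * qj q - qk p * qk q)
       (qr p * qi q + qi p * qr q + qj p * qk q - qk p * qj q)
       (qr p * qj q - qi p * qk q + qj p * qr q + qk p * qi q)
       (qr p * qk q + qi p * qj q - qj p * qi q + qk p * qr q).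

(* A quaternionic 3x3 matrix [[a,b,r],[c,d,s],[0,0,1]], acting on H^2 by
   (x,y) |-> (a x + b y + r, c x + d y + s). *)
Record aff := Aff { aa : quat; ab : quat; ac : quat; ad : quat;
                    ar : quat; as_ : quat }.

Definition aff_id : aff := Aff qone qzero qzero qone qzero qzero.

Definition aff_mul (g h : aff) : aff :=
  Aff (qadd (qmul (aa g) (aa h)) (qmul (ab g) (ac h)))
      (qadd (qmul (aa g) (ab h)) (qmul (ab g) (ad h)))
      (qadd (qmul (ac g) (aa h)) (qmul (ad g) (ac h)))
      (qadd (qmul (ac g) (ab h)) (qmul (ad g) (ad h)))
      (qadd (qadd (qmul (aa g) (ar h)) (qmul (ab g) (as_ h))) (ar g))
      (qadd (qadd (qmul (ac g) (ar h)) (qmul (ad g) (as_ h))) (as_ g)).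

Definition aff_act (g : aff) (p : quat * quat) : quat * quat :=
  (qadd (qadd (qmul (aa g) p.1) (qmul (ab g) p.2)) (ar g),
   qadd (qadd (qmul (ac g) p.1) (qmul (ad g) p.2)) (as_ g)).

Definition aff_inverse (g h : aff) : Prop :=
  aff_mul g h = aff_id /\ aff_mul h g = aff_id.

Definition in_Aff (g : aff) : Prop := exists h, aff_inverse g h.

Definition is_subgroup (Gamma : aff -> Prop) : Prop :=
  Gamma aff_id /\
  (forall g h, Gamma g -> Gamma h -> Gamma (aff_mul g h)) /\
  (forall g, Gamma g -> exists h, Gamma h /\ aff_inverse g h).

Definition acts_freely (Gamma : aff -> Prop) : Prop :=
  forall g p, Gamma g -> aff_act g p = p -> g = aff_id.

Definition in_G1 (g : aff) : Prop :=
  aa g <> qzero /\ ac g = qzero /\ ad g = qone.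
Definition in_G2 (g : aff) : Prop :=
  aa g = qone /\ ac g = qzero /\ ad g <> qzero.

End Quat.

(* Main.v *)
From HB Require Import structures.
Require Import Defs.
From mathcomp Require Import all_boot all_order all_algebra.
From mathcomp Require Import reals ring lra.
From Stdlib Require Import Classical.
Set Implicit Arguments. Unset Strict Implicit. Unset Printing Implicit Defensive.
Import GRing.Theory Num.Theory.
Local Open Scope ring_scope.

Section Q.
Variable R : realType.
Definition q2t (q : quat R) := (qr q, qi q, qj q, qk q).
Definition t2q (t : R * R * R * R) := Quat t.1.1.1 t.1.1.2 t.1.2 t.2.
Lemma q2tK : cancel q2t t2q. Proof. by case. Qed.
HB.instance Definition _ := Choice.copy (quat R) (can_type q2tK).
Definition qopp (q : quat R) := Quat (- qr q) (- qi q) (- qj q) (- qk q).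
Lemma qeq (p q : quat R) : qr p = qr q -> qi p = qi q -> qj p = qj q -> qk p = qk q -> p = q.
Proof. by case: p; case: q => /= *; subst. Qed.
Ltac qsolve := repeat match goal with q : quat R |- _ => case: q => ? ? ? ? end;
  apply: qeq; rewrite /qadd /qmul /qopp /qone /qzero /=; ring.
Lemma qaddA : associative (@qadd R). Proof. move=> *; qsolve. Qed.
Lemma qaddC : commutative (@qadd R). Proof. move=> *; qsolve. Qed.
Lemma qadd0 : left_id (qzero R) (@qadd R). Proof. move=> *; qsolve. Qed.
Lemma qaddN : left_inverse (qzero R) qopp (@qadd R). Proof. move=> *; qsolve. Qed.
Lemma qmulA : associative (@qmul R). Proof. move=> *; qsolve. Qed.
Lemma qmul1 : left_id (qone R) (@qmul R). Proof. move=> *; qsolve. Qed.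
Lemma qmulr1 : right_id (qone R) (@qmul R). Proof. move=> *; qsolve. Qed.
Lemma qmulDl : left_distributive (@qmul R) (@qadd R). Proof. move=> *; qsolve. Qed.
Lemma qmulDr : right_distributive (@qmul R) (@qadd R). Proof. move=> *; qsolve. Qed.
Lemma qone0 : qone R != qzero R.
Proof. apply/eqP => /(congr1 (@qr R)) /= /eqP; by rewrite oner_eq0. Qed.
HB.instance Definition _ := GRing.isNzRing.Build (quat R) qaddA qaddC qadd0 qaddN qmulA qmul1 qmulr1 qmulDl qmulDr qone0.
Lemma qaddE p q : qadd p q = p + q. Proof. by []. Qed.
Lemma qmulE p q : qmul p q = p * q. Proof. by []. Qed.
Lemma qzeroE : qzero R = 0. Proof. by []. Qed.
Lemma qoneE : qone R = 1. Proof. by []. Qed.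
Definition qn (q : quat R) := qr q ^+ 2 + qi q ^+ 2 + qj q ^+ 2 + qk q ^+ 2.
Definition qinv (q : quat R) :=
  Quat (qr q / qn q) (- qi q / qn q) (- qj q / qn q) (- qk q / qn q).
Lemma qn_neq0 q : q != 0 -> qn q != 0.
Proof.
move=> qn0; apply/eqP => h; move/eqP: qn0; apply.
have h1 : qr q = 0 by apply/eqP; rewrite -sqrf_eq0; apply/eqP; rewrite /qn in h; nra.
have h2 : qi q = 0 by apply/eqP; rewrite -sqrf_eq0; apply/eqP; rewrite /qn in h; nra.
have h3 : qj q = 0 by apply/eqP; rewrite -sqrf_eq0; apply/eqP; rewrite /qn in h; nra.
have h4 : qk q = 0 by apply/eqP; rewrite -sqrf_eq0; apply/eqP; rewrite /qn in h; nra.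
by apply: qeq.
Qed.
Lemma qmulV q : q != 0 -> q * qinv q = 1.
Proof.
move=> /qn_neq0; rewrite -qmulE -qoneE /qmul /qinv /qone /=.
case: q => a b c d; rewrite /qn /= => h.
apply: qeq => /=; field => //.
Qed.
Lemma qVmul q : q != 0 -> qinv q * q = 1.
Proof.
move=> /qn_neq0; rewrite -qmulE -qoneE /qmul /qinv /qone /=.
case: q => a b c d; rewrite /qn /= => h.
apply: qeq => /=; field => //.
Qed.
Lemma qmul_eq0 (p q : quat R) : p * q = 0 -> p = 0 \/ q = 0.
Proof.
move=> h; case: (eqVneq p 0) => [|hp]; first by left.
right; by rewrite -[q]mul1r -(qVmul hp) -mulrA h mulr0.
Qed.
Lemma qmulI (p a b : quat R) : p != 0 -> p * a = p * b -> a = b.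
Proof. move=> hp h; by rewrite -[a]mul1r -(qVmul hp) -mulrA h mulrA qVmul // mul1r. Qed.
Lemma qmulIr (p a b : quat R) : p != 0 -> a * p = b * p -> a = b.
Proof. move=> hp h; by rewrite -[a]mulr1 -(qmulV hp) mulrA h -mulrA qmulV // mulr1. Qed.
End Q.


Section V.
Variable R : realType.
Local Notation Q := (quat R).
Local Notation V := (quat R * quat R)%type.
Lemma qoppE (p : Q) : qopp p = - p. Proof. by []. Qed.

Definition lapp (g : aff R) (u : V) : V := (aa g * u.1 + ab g * u.2, ac g * u.1 + ad g * u.2).
Definition rapp (w : V) (g : aff R) : V := (w.1 * aa g + w.2 * ac g, w.1 * ab g + w.2 * ad g).
Definition dot (w u : V) : Q := w.1 * u.1 + w.2 * u.2.
Definition vsc (u : V) (l : Q) : V := (u.1 * l, u.2 * l).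
Definition vadd (u v : V) : V := (u.1 + v.1, u.2 + v.2).
Definition vsub (u v : V) : V := (u.1 - v.1, u.2 - v.2).
Definition vz : V := (0, 0).

Ltac brute := rewrite -?qaddE -?qmulE -?qoppE -?qzeroE -?qoneE;
  repeat match goal with
  | a : aff _ |- _ => case: a => ? ? ? ? ? ?
  | q : quat _ |- _ => case: q => ? ? ? ?
  | q : (quat _ * quat _)%type |- _ => case: q => ? ?
  end; rewrite /= /lapp /rapp /aff_mul /dot /vsc /vadd /vsub /aff_id /=;
  try congr pair;
  apply: qeq; rewrite /qadd /qmul /qopp /qone /qzero /=; ring.

Lemma lapp_mul g h u : lapp (aff_mul g h) u = lapp g (lapp h u). Proof. brute. Qed.
Lemma rapp_mul g h w : rapp w (aff_mul g h) = rapp (rapp w g) h. Proof. brute. Qed.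
Lemma dot_rl w g u : dot w (lapp g u) = dot (rapp w g) u. Proof. brute. Qed.
Lemma lapp_id u : lapp (aff_id R) u = u. Proof. brute. Qed.
Lemma rapp_id w : rapp w (aff_id R) = w. Proof. brute. Qed.
Lemma dot_sc w u l : dot w (vsc u l) = dot w u * l. Proof. brute. Qed.
Lemma lapp_add g u v : lapp g (vadd u v) = vadd (lapp g u) (lapp g v). Proof. brute. Qed.
Lemma lapp_sc g u l : lapp g (vsc u l) = vsc (lapp g u) l. Proof. brute. Qed.
Lemma lapp_sub g u v : lapp g (vsub u v) = vsub (lapp g u) (lapp g v). Proof. brute. Qed.
Lemma dot_sub w u v : dot w (vsub u v) = dot w u - dot w v. Proof. brute. Qed.
Lemma dot_subl w w' u : dot (vsub w w') u = dot w u - dot w' u. Proof. brute. Qed.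
Lemma aff_actE g p : aff_act g p = vadd (lapp g p) (ar g, as_ g). Proof. brute. Qed.
Lemma lapp0 g : lapp g vz = vz. Proof. brute. Qed.
Lemma lapp_lin g k z a b : lapp g (vadd (vsc k a) (vsc z b)) = vadd (vsc (lapp g k) a) (vsc (lapp g z) b). Proof. brute. Qed.
Lemma fv_lin g k z a b : vsub (lapp g (vadd (vsc k a) (vsc z b))) (vadd (vsc k a) (vsc z b)) = vadd (vsc (vsub (lapp g k) k) a) (vsc (vsub (lapp g z) z) b). Proof. brute. Qed.
Lemma dot_f w g u : dot w (vsub (lapp g u) u) = dot (vsub (rapp w g) w) u. Proof. brute. Qed.
Lemma lappM g u : lapp (Aff (aa g - 1) (ab g) (ac g) (ad g - 1) 0 0) u = vsub (lapp g u) u. Proof. brute. Qed.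
End V.


Section L.
Variable R : realType.
Local Notation Q := (quat R).
Local Notation V := (quat R * quat R)%type.
Local Notation vz := (vz R).

Lemma oneq_neq0 : (1 : Q) != 0. Proof. exact: oner_neq0. Qed.

Lemma K1 (M : aff R) :
  (exists u, u <> vz /\ lapp M u = vz) \/ (forall c, exists x, lapp M x = c).
Proof.
case: M => m11 m12 m21 m22 t1 t2; rewrite /lapp /vz /=.
have u1ne (a : Q) : (a, 1) <> (0, 0) :> V.
  by case=> _ /eqP; rewrite oner_eq0.
case: (eqVneq m11 0) => [->|h11].
  case: (eqVneq m21 0) => [->|h21].
    left; exists (1, 0); split; first by case=> /eqP; rewrite oner_eq0.
    by rewrite !mul0r !mulr0 !addr0.
  case: (eqVneq m12 0) => [->|h12].
    left; exists (- (qinv m21 * m22), 1); split => //.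
    by rewrite !mul0r !mulr1 add0r mulrN mulrA qmulV // mul1r addNr.
  right => -[c1 c2]; pose x2 := qinv m12 * c1.
  exists (qinv m21 * (c2 - m22 * x2), x2) => /=.
  by rewrite mul0r add0r /x2 mulrA qmulV // mul1r mulrA qmulV // mul1r subrK.
pose i := qinv m11; pose s := m22 - m21 * i * m12.
case: (eqVneq s 0) => [hs|hs].
  left; exists (- (i * m12), 1); split => //.
  rewrite !mulr1 !mulrN !mulrA /i qmulV // mul1r addNr; congr pair.
  by rewrite addrC -hs /s /i.
right => -[c1 c2]; pose x2 := qinv s * (c2 - m21 * i * c1).
exists (i * (c1 - m12 * x2), x2) => /=; congr pair.
  by rewrite mulrA /i qmulV // mul1r subrK.
have e : s * x2 = c2 - m21 * i * c1 by rewrite /x2 mulrA qmulV // mul1r.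
rewrite /s mulrBl in e; clearbody x2.
by rewrite !mulrBr !mulrA -addrA [X in _ + X]addrC e addrC subrK.
Qed.

Lemma vsub_eq0 (a b : V) : vsub a b = vz -> a = b.
Proof. case: a b => [a1 a2] [b1 b2]; rewrite /vsub /vz /= => /pair_equal_spec [/eqP h1 /eqP h2].
by move: h1 h2; rewrite !subr_eq0 => /eqP-> /eqP->. Qed.
Lemma vsubbb (a : V) : vsub a a = vz. Proof. by rewrite /vsub /vz !subrr. Qed.
Lemma vsc_inj (a b : V) l : l != 0 -> vsc a l = vsc b l -> a = b.
Proof. case: a b => [a1 a2] [b1 b2] hl /pair_equal_spec [h1 h2]; congr pair; exact: qmulIr hl _. Qed.
Lemma vsc0 (a : V) : vsc a 0 = vz. Proof. by rewrite /vsc /vz !mulr0. Qed.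
Lemma vsc_z l : vsc vz l = vz. Proof. by rewrite /vsc /vz !mul0r. Qed.
Lemma vadd_z (a : V) : vadd vz a = a. Proof. by case: a => ? ?; rewrite /vadd /vz !add0r. Qed.
Lemma vsc_eq0 (k : V) a : k <> vz -> vsc k a = vz -> a = 0.
Proof.
case: k => k1 k2 hk /pair_equal_spec [/= h1 h2]; case: (qmul_eq0 h1) => // e1.
case: (qmul_eq0 h2) => // e2; by case: hk; rewrite e1 e2.
Qed.

Lemma basis (k z : V) : k <> vz -> (forall l, z <> vsc k l) ->
  forall z', exists a b, z' = vadd (vsc k a) (vsc z b).
Proof.
move=> hk hz z'.
case: (K1 (Aff k.1 z.1 k.2 z.2 0 0)) => [[[a b] [hab e]]|hs]; last first.
  by case: (hs z') => -[a b] <-; exists a, b.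
exfalso; move: e; rewrite /lapp /= => /pair_equal_spec [e1 e2].
case: (eqVneq b 0) => [hb|hb].
  subst b; move: e1 e2; rewrite !mulr0 !addr0 => e1 e2.
  have : vsc k a = vz by rewrite /vsc /vz e1 e2.
  move=> /(vsc_eq0 hk) ha; by apply: hab; rewrite ha.
apply: (hz (- (a * qinv b))); case: (z) e1 e2 => z1 z2 /= e1 e2.
rewrite /vsc /=; congr pair.
  apply: (qmulIr hb); rewrite mulrN mulNr -!mulrA qVmul // mulr1; apply/eqP.
  by rewrite -addr_eq0 addrC e1.
apply: (qmulIr hb); rewrite mulrN mulNr -!mulrA qVmul // mulr1; apply/eqP.
by rewrite -addr_eq0 addrC e2.
Qed.

Lemma fix_line g v u : v <> vz -> lapp g v = v -> lapp g u = u ->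
  (exists z, lapp g z <> z) -> exists l, u = vsc v l.
Proof.
move=> hv gv gu [z hz]; apply: NNPP => hn; apply: hz.
have hb : forall l, u <> vsc v l by move=> l e; apply: hn; exists l.
case: (basis hv hb z) => a [b ->].
by rewrite lapp_lin gv gu.
Qed.

Lemma img_line g k z z' : k <> vz -> lapp g k = k -> vsub (lapp g z) z <> vz ->
  exists mu, vsub (lapp g z') z' = vsc (vsub (lapp g z) z) mu.
Proof.
move=> hk gk hz.
have hb : forall l, z <> vsc k l.
  by move=> l e; apply: hz; rewrite e lapp_sc gk vsubbb.
case: (basis hk hb z') => a [b ->]; exists b.
by rewrite fv_lin gk vsubbb vsc_z vadd_z.
Qed.

Lemma annih (x : V) : exists w, w <> vz /\ dot w x = 0.
Proof.
case: x => x1 x2; case: (eqVneq x1 0) => [h|h].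
  exists (1, 0); split; first by move/pair_equal_spec => [/eqP]; rewrite oner_eq0.
  by rewrite /dot /= h mul1r mul0r addr0.
exists (-(x2 * qinv x1), 1); split.
  by move/pair_equal_spec => [_ /eqP]; rewrite oner_eq0.
by rewrite /dot /= mulNr -mulrA qVmul // mulr1 mul1r addNr.
Qed.

Lemma dot_zero (w : V) : (forall u, dot w u = 0) -> w = vz.
Proof.
case: w => w1 w2 h; have h1 := h (1, 0); have h2 := h (0, 1).
rewrite /dot /= in h1 h2; congr pair.
  by move: h1; rewrite mulr1 mulr0 addr0.
by move: h2; rewrite mulr1 mulr0 add0r.
Qed.

Lemma cofix_ex g : (exists k, k <> vz /\ lapp g k = k) -> (exists z, lapp g z <> z) ->
  exists w, w <> vz /\ rapp w g = w.
Proof.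
move=> [k [hk gk]] [z hz].
have hx : vsub (lapp g z) z <> vz by move/vsub_eq0.
case: (annih (vsub (lapp g z) z)) => w [hw wx]; exists w; split => //.
apply: vsub_eq0; apply: dot_zero => u; rewrite -dot_f.
case: (img_line u hk gk hx) => mu ->.
by rewrite dot_sc wx mul0r.
Qed.

Lemma pair_lemma (A B : aff R) v w : v <> vz -> lapp A v = v ->
  (forall u, lapp A u = u -> exists l, u = vsc v l) -> rapp w A = w ->
  (exists k, k <> vz /\ lapp B k = k) ->
  (exists u, u <> vz /\ lapp (aff_mul A B) u = u) ->
  lapp B v = v \/ rapp w B = w.
Proof.
move=> hv Av Aline wA [k [hk Bk]] [u [hu ABu]].
apply: NNPP => /not_or_and [nBv nwB].
rewrite lapp_mul in ABu.
have e : dot w u = dot w (lapp B u) by rewrite -{1}ABu dot_rl wA.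
have hd : dot w (vsub (lapp B u) u) = 0 by rewrite dot_sub e subrr.
have fu : vsub (lapp B u) u = vz.
  apply: NNPP => hf; apply: nwB; apply: vsub_eq0; apply: dot_zero => z.
  rewrite -dot_f; case: (img_line z hk Bk hf) => mu ->.
  by rewrite dot_sc hd mul0r.
have Bu := vsub_eq0 fu; rewrite Bu in ABu.
case: (Aline _ ABu) => l ul.
have hl : l != 0 by apply/eqP => l0; apply: hu; rewrite ul l0 vsc0.
apply: nBv; apply: (vsc_inj hl); by rewrite -lapp_sc -ul Bu.
Qed.
End L.


Section M.
Variable R : realType.
Local Notation Q := (quat R).
Local Notation V := (quat R * quat R)%type.
Local Notation vz := (vz R).

Ltac fin := rewrite ?qoneE ?qzeroE ?(mul0r, mulr0, addr0, add0r, mul1r, mulr1, mulNr, mulrN);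
  rewrite -?mulrA ?qVmul ?qmulV // ?mulr1 ?addNr ?addrN ?oppr0 //;
  rewrite ?mulrA ?qVmul ?qmulV // ?mul1r ?addNr ?addrN //.

Lemma invG2a (v1 v2 : Q) : v1 != 0 ->
  aff_inverse (Aff (qinv v1) 0 (-(v2 * qinv v1)) 1 0 0) (Aff v1 0 v2 1 0 0).
Proof. move=> h; rewrite /aff_inverse /aff_mul /aff_id /= !qaddE !qmulE; split; congr Aff; fin. Qed.
Lemma invG2b (v2 : Q) : v2 != 0 ->
  aff_inverse (Aff 0 (qinv v2) 1 0 0 0) (Aff 0 1 v2 0 0 0).
Proof. move=> h; rewrite /aff_inverse /aff_mul /aff_id /= !qaddE !qmulE; split; congr Aff; fin. Qed.
Lemma invG1a (w1 w2 : Q) : w2 != 0 ->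
  aff_inverse (Aff 1 0 w1 w2 0 0) (Aff 1 0 (-(qinv w2 * w1)) (qinv w2) 0 0).
Proof. move=> h; rewrite /aff_inverse /aff_mul /aff_id /= !qaddE !qmulE; split; congr Aff; fin. Qed.
Lemma invG1b (w1 : Q) : w1 != 0 ->
  aff_inverse (Aff 0 1 w1 0 0 0) (Aff 0 (qinv w1) 1 0 0 0).
Proof. move=> h; rewrite /aff_inverse /aff_mul /aff_id /= !qaddE !qmulE; split; congr Aff; fin. Qed.

Lemma inv_l1 (g h : aff R) : aff_inverse g h -> forall x, lapp g (lapp h x) = x.
Proof. by case=> e1 e2 x; rewrite -lapp_mul e1 lapp_id. Qed.
Lemma inv_l2 (g h : aff R) : aff_inverse g h -> forall x, lapp h (lapp g x) = x.
Proof. by case=> e1 e2 x; rewrite -lapp_mul e2 lapp_id. Qed.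
Lemma inv_r1 (g h : aff R) : aff_inverse g h -> forall x, rapp (rapp x g) h = x.
Proof. by case=> e1 e2 x; rewrite -rapp_mul e1 rapp_id. Qed.
Lemma inv_r2 (g h : aff R) : aff_inverse g h -> forall x, rapp (rapp x h) g = x.
Proof. by case=> e1 e2 x; rewrite -rapp_mul e2 rapp_id. Qed.

Lemma one_pair_neq (a : Q) : (1, a) <> vz.
Proof. by move/pair_equal_spec => [/eqP]; rewrite oner_eq0. Qed.
Lemma pair_one_neq (a : Q) : (a, 1) <> vz.
Proof. by move/pair_equal_spec => [_ /eqP]; rewrite oner_eq0. Qed.

Lemma ker_of_Gamma (Gamma : aff R -> Prop) (Hfree : acts_freely Gamma) g :
  Gamma g -> exists u, u <> vz /\ lapp g u = u.
Proof.
move=> Gg; case: (K1 (Aff (aa g - 1) (ab g) (ac g) (ad g - 1) 0 0)) => [[u [hu e]]|hs].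
  by exists u; split => //; apply: vsub_eq0; rewrite -lappM.
case: (hs (-(ar g), -(as_ g))) => x; rewrite lappM => e.
have : aff_act g x = x.
  rewrite aff_actE; move: e; case: (lapp g x) => a1 a2; case: x => x1 x2.
  rewrite /vsub /vadd /= => /pair_equal_spec [/= h1 h2]; congr pair.
    by rewrite -[ar g]opprK -h1 opprB addrC subrK.
  by rewrite -[as_ g]opprK -h2 opprB addrC subrK.
move/(Hfree _ _ Gg) => ->; exists (1, 0); split; first exact: one_pair_neq.
exact: lapp_id.
Qed.

Lemma G2_conj (Gamma : aff R -> Prop) (HG : is_subgroup Gamma) (v : V) :
  v <> vz -> (forall g, Gamma g -> lapp g v = v) ->
  exists h hinv : aff R, aff_inverse h hinv /\
    (forall g, Gamma g -> in_G2 (aff_mul (aff_mul h g) hinv)).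
Proof.
case: v => v1 v2 hv Hv.
have [P [Pi [hP [e1 e2]]]] : exists P Pi, aff_inverse P Pi /\
    lapp Pi (1, 0) = (v1, v2) /\ lapp P (v1, v2) = (1, 0).
  case: (eqVneq v1 0) => [h1|h1].
    have h2 : v2 != 0 by apply/eqP => h2; apply: hv; rewrite h1 h2.
    exists (Aff 0 (qinv v2) 1 0 0 0), (Aff 0 1 v2 0 0 0); split; first exact: invG2b.
    rewrite /lapp /= h1; split; congr pair; fin.
  exists (Aff (qinv v1) 0 (-(v2 * qinv v1)) 1 0 0), (Aff v1 0 v2 1 0 0); split; first exact: invG2a.
  rewrite /lapp /=; split; congr pair; fin.
exists P, Pi; split => // g Gg.
case: HG => _ [_ Hinv]; case: (Hinv g Gg) => g' [_ hg].
have hC : lapp (aff_mul (aff_mul P g) Pi) (1, 0) = (1, 0) by rewrite !lapp_mul e1 Hv // e2.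
have inj : forall u, lapp (aff_mul (aff_mul P g) Pi) u = vz -> u = vz.
  move=> u hu; have : lapp (aff_mul (aff_mul P g') Pi) (lapp (aff_mul (aff_mul P g) Pi) u) = u.
    by rewrite !lapp_mul (inv_l2 hP) (inv_l2 hg) (inv_l1 hP).
  by rewrite hu lapp0.
move: inj hC; case: (aff_mul (aff_mul P g) Pi) => a b c d r s inj hC.
have [ha hc] : a = 1 /\ c = 0.
  by move: hC; rewrite /lapp /= !mulr1 !mulr0 !addr0 => /pair_equal_spec.
rewrite /in_G2 /= ha hc; split => //; split => // hd.
apply: (@pair_one_neq (- b)); apply: inj; rewrite /lapp /= hc hd ha qzeroE /vz.
by congr pair; fin.
Qed.

Lemma G1_conj (Gamma : aff R -> Prop) (HG : is_subgroup Gamma) (w : V) :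
  w <> vz -> (forall g, Gamma g -> rapp w g = w) ->
  exists h hinv : aff R, aff_inverse h hinv /\
    (forall g, Gamma g -> in_G1 (aff_mul (aff_mul h g) hinv)).
Proof.
case: w => w1 w2 hw Hw.
have [P [Pi [hP e1]]] : exists P Pi, aff_inverse P Pi /\ rapp (0, 1) P = (w1, w2).
  case: (eqVneq w2 0) => [h2|h2].
    have h1 : w1 != 0 by apply/eqP => h1; apply: hw; rewrite h1 h2.
    exists (Aff 0 1 w1 0 0 0), (Aff 0 (qinv w1) 1 0 0 0); split; first exact: invG1b.
    rewrite /rapp /= h2; congr pair; fin.
  exists (Aff 1 0 w1 w2 0 0), (Aff 1 0 (-(qinv w2 * w1)) (qinv w2) 0 0); split; first exact: invG1a.
  rewrite /rapp /=; congr pair; fin.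
have e2 : rapp (w1, w2) Pi = (0, 1) by rewrite -e1 (inv_r1 hP).
exists P, Pi; split => // g Gg.
case: HG => _ [_ Hinv]; case: (Hinv g Gg) => g' [_ hg].
have hC : rapp (0, 1) (aff_mul (aff_mul P g) Pi) = (0, 1) by rewrite !rapp_mul e1 Hw // e2.
have inj : forall u, rapp u (aff_mul (aff_mul P g) Pi) = vz -> u = vz.
  move=> u hu; have : rapp (rapp u (aff_mul (aff_mul P g) Pi)) (aff_mul (aff_mul P g') Pi) = u.
    by rewrite !rapp_mul (inv_r2 hP) (inv_r1 hg) (inv_r1 hP).
  by rewrite hu /vz /rapp /= !mul0r !addr0.
move: inj hC; case: (aff_mul (aff_mul P g) Pi) => a b c d r s inj hC.
have [hc hd] : c = 0 /\ d = 1.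
  by move: hC; rewrite /rapp /= !mul1r !mul0r !add0r => /pair_equal_spec.
rewrite /in_G1 /= hc hd; split => //.
move=> ha; apply: (@one_pair_neq (- b)); apply: inj; rewrite /rapp /= hc hd ha.
by rewrite -qzeroE; congr pair; fin.
Qed.
End M.


Theorem mainTheorem7 (R : realType) (Gamma : aff R -> Prop)
  (HG : is_subgroup Gamma) (Hfree : acts_freely Gamma) :
  exists h hinv : aff R, aff_inverse h hinv /\
    ((forall g, Gamma g -> in_G1 (aff_mul (aff_mul h g) hinv)) \/
     (forall g, Gamma g -> in_G2 (aff_mul (aff_mul h g) hinv))).
Proof.
have HG' := HG; case: HG' => Hid [Hmul Hinv].
case: (classic (exists g0, Gamma g0 /\ exists z, lapp g0 z <> z)) => [[g0 [G0 nz]]|hno].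
  case: (ker_of_Gamma Hfree G0) => v0 [hv0 Av0].
  have Aline : forall u, lapp g0 u = u -> exists l, u = vsc v0 l.
    by move=> u hu; apply: (fix_line hv0 Av0 hu nz).
  case: (cofix_ex (ex_intro _ v0 (conj hv0 Av0)) nz) => w0 [hw0 wA0].
  have pl : forall X, Gamma X -> lapp X v0 = v0 \/ rapp w0 X = w0.
    move=> X GX; apply: (pair_lemma hv0 Av0 Aline wA0 (ker_of_Gamma Hfree GX)).
    exact: (ker_of_Gamma Hfree (Hmul _ _ G0 GX)).
  have : (forall B, Gamma B -> lapp B v0 = v0) \/ (forall C, Gamma C -> rapp w0 C = w0).
    apply: NNPP => /not_or_and [n1 n2].
    have [B hB] := not_all_ex_not _ _ n1; have [GB nB] := imply_to_and _ _ hB.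
    have [C hC] := not_all_ex_not _ _ n2; have [GC nC] := imply_to_and _ _ hC.
    case: (pl B GB) => [/nB []|wB]; case: (pl C GC) => [Cv|/nC []].
    case: (pl _ (Hmul _ _ GB GC)) => [|].
      by rewrite lapp_mul Cv.
    by rewrite rapp_mul wB.
  case=> [H2|H1].
    case: (G2_conj HG hv0 H2) => h [hinv [hh hG]]; exists h, hinv; split => //; by right.
  case: (G1_conj HG hw0 H1) => h [hinv [hh hG]]; exists h, hinv; split => //; by left.
have H2 : forall g, Gamma g -> lapp g (1, 0) = (1, 0).
  move=> g Gg; apply: NNPP => hn; apply: hno; exists g; split => //; by exists (1, 0).
case: (G2_conj HG (@one_pair_neq R 0) H2) => h [hinv [hh hG]]; exists h, hinv; split => //; by right.
Qed.
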